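(* Let $n\ge 1$, let $\mathbf{w}\in\mathbb{R}^n$ and $\mathbf{v}=(v_1,\dots,v_n)\in\mathbb{R}^n$ with $v_e>0$ for all $e$, and let $V_c>0$. Define the canonical measure $\Lambda:\mathbb{R}^n\to\mathbb{R}^{n+1}$, $\Lambda(\boldsymbol{\rho})=(\boldsymbol{\rho}\circ\boldsymbol{\rho}-\boldsymbol{\rho},\ \boldsymbol{\rho}^T\mathbf{v}-V_c)$. Let $\mathcal{E}_a=\{(\boldsymbol{\epsilon},\nu)\in\mathbb{R}^{n+1}:\boldsymbol{\epsilon}\le 0,\ \nu\le 0\}$ and let $\Psi$ be its indicator function ($\Psi=0$ on $\mathcal{E}_a$, $+\infty$ elsewhere). Let $\mathcal{E}_a^*=\{\boldsymbol{\zeta}=(\boldsymbol{\sigma},\tau)\in\mathbb{R}^{n+1}:\boldsymbol{\sigma}\ge 0,\ \tau\ge 0\}$ and let $\Psi^*$ be its indicator function (which is the Fenchel conjugate of $\Psi$). Define $$\Pi_u(\boldsymbol{\rho})=\Psi(\Lambda(\boldsymbol{\rho}))-\mathbf{w}^T\boldsymbol{\rho},\qquad \Xi(\boldsymbol{\rho},\boldsymbol{\zeta})=\Lambda(\boldsymbol{\rho})^T\boldsymbol{\zeta}-\mathbf{w}^T\boldsymbol{\rho}-\Psi^*(\boldsymbol{\zeta}),$$ and, for $\boldsymbol{\zeta}=(\boldsymbol{\sigma},\tau)$ with all $\sigma_e\neq 0$, $$\Pi_u^d(\boldsymbol{\zeta})=P_u^d(\boldsymbol{\zeta})-\Psi^*(\boldsymbol{\zeta}),\qquad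 P_u^d(\boldsymbol{\sigma},\tau)=-\sum_{e=1}^n\frac{(\sigma_e+w_e-\tau v_e)^2}{4\sigma_e}-\tau V_c .$$ If $(\bar{\boldsymbol{\rho}},\bar{\boldsymbol{\zeta}})$ is a KKT point of $\Xi$, then $\bar{\boldsymbol{\rho}}$ is a KKT point of $\Pi_u$, $\bar{\boldsymbol{\zeta}}$ is a KKT point of $\Pi_u^d$, and $$\Pi_u(\bar{\boldsymbol{\rho}})=\Xi(\bar{\boldsymbol{\rho}},\bar{\boldsymbol{\zeta}})=\Pi_u^d(\bar{\boldsymbol{\zeta}}).$$
   Context: $\boldsymbol{\rho}\circ\boldsymbol{\rho}=(\rho_e^2)_e$ denotes the Hadamard product; vector inequalities are componentwise. In the paper $\mathbf{w}=\mathbf{c}(\mathbf{u})$ is the vector of element energies for a given displacement $\mathbf{u}$, and $\Pi_u$ is the unconstrained reformulation of the knapsack problem $\min\{-\mathbf{w}^T\boldsymbol{\rho}:\mathbf{v}^T\boldsymbol{\rho}\le V_c,\ \boldsymbol{\rho}\in\{0,1\}^n\}$. ''KKT point'' refers to the Karush–Kuhn–Tucker conditions for the inequality constraints $\boldsymbol{\rho}\circ\boldsymbol{\rho}-\boldsymbol{\rho}\le 0$ and $\mathbf{v}^T\boldsymbol{\rho}-V_c\le 0$ with multipliers $\boldsymbol{\sigma}$ and $\tau$ respectively, i.e. stationarity together with $\boldsymbol{\sigma}\ge 0$, $\boldsymbol{\sigma}^T(\boldsymbol{\rho}\circ\boldsymbol{\rho}-\boldsymbol{\rho})=0$, $\tau\ge0$,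 $\tau(\mathbf{v}^T\boldsymbol{\rho}-V_c)=0$ and primal feasibility. *)

(* Defs.v *)
From HB Require Import structures.
From mathcomp Require Import all_boot all_order all_algebra.
From mathcomp Require Import all_classical all_reals all_analysis.
Set Implicit Arguments. Unset Strict Implicit. Unset Printing Implicit Defensive.
Import Order.TTheory GRing.Theory Num.Theory.
Import numFieldNormedType.Exports.
Local Open Scope ring_scope.

Section Canonical.
Variables (R : realType) (n : nat).
Implicit Types (rho w v sigma : 'I_n -> R) (Vc tau : R).

Definition upd (x : 'I_n -> R) (i : 'I_n) (s : R) : 'I_n -> R :=
  fun j => x j + (if j == i then s else 0).

Definition has_partial (f : ('I_n -> R) -> R) (x : 'I_n -> R) (i : 'I_n) (d : R) : Prop :=
  is_derive (0 : R) (1 : R) (fun s : R => f (upd x i s)) d.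

Definition Lam_eps rho : 'I_n -> R := fun e => rho e ^+ 2 - rho e.
Definition Lam_nu v Vc rho : R := \sum_(e < n) rho e * v e - Vc.

Definition Psi (eps : 'I_n -> R) (nu : R) : \bar R :=
  if `[< (forall e, eps e <= 0) /\ nu <= 0 >] then 0%E else +oo%E.

Definition Psi_star sigma tau : \bar R :=
  if `[< (forall e, 0 <= sigma e) /\ 0 <= tau >] then 0%E else +oo%E.

Definition dotw w rho : R := \sum_(e < n) w e * rho e.

Definition Pi_u w v Vc rho : \bar R :=
  (Psi (Lam_eps rho) (Lam_nu v Vc rho) - (dotw w rho)%:E)%E.

Definition Lagr w v Vc sigma tau rho : R :=
  \sum_(e < n) Lam_eps rho e * sigma e + Lam_nu v Vc rho * tau - dotw w rho.

Definition Xi w v Vc rho sigma tau : \bar R :=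
  ((Lagr w v Vc sigma tau rho)%:E - Psi_star sigma tau)%E.

Definition Pud w v Vc sigma tau : R :=
  - (\sum_(e < n) (sigma e + w e - tau * v e) ^+ 2 / (4 * sigma e)) - tau * Vc.

(* Pi_u^d = P_u^d - Psi^* (defined for sigma_e <> 0) *)
Definition Pi_ud w v Vc sigma tau : \bar R :=
  ((Pud w v Vc sigma tau)%:E - Psi_star sigma tau)%E.

(* KKT conditions shared by Xi and Pi_u: stationarity in rho of the
   Lagrangian, dual feasibility, complementarity, primal feasibility. *)
Definition KKT_conds w v Vc rho sigma tau : Prop :=
  [/\ forall i, has_partial (Lagr w v Vc sigma tau) rho i 0,
      (forall e, 0 <= sigma e) /\ 0 <= tau,
      \sum_(e < n) sigma e * Lam_eps rho e = 0 /\ tau * Lam_nu v Vc rho = 0 &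
      (forall e, Lam_eps rho e <= 0) /\ Lam_nu v Vc rho <= 0].

Definition KKT_Xi w v Vc rho sigma tau : Prop := KKT_conds w v Vc rho sigma tau.

Definition KKT_Pi_u w v Vc rho : Prop :=
  exists sigma tau, KKT_conds w v Vc rho sigma tau.

(* KKT point of Pi_u^d = P_u^d - Psi^*: KKT point of
   max P_u^d(zeta) s.t. -zeta <= 0, with multipliers (mu, kappa):
   grad P_u^d(zeta) = -(mu, kappa), mu, kappa >= 0, complementarity,
   zeta >= 0; and zeta in the domain (sigma_e <> 0). *)
Definition KKT_Pi_ud w v Vc sigma tau : Prop :=
  (forall e, sigma e != 0) /\
  exists (mu : 'I_n -> R) (kappa : R),
  [/\ (forall e, has_partial (fun s => Pud w v Vc s tau) sigma e (- mu e)) /\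
      is_derive tau (1 : R) (fun t : R => Pud w v Vc sigma t) (- kappa),
      (forall e, 0 <= mu e) /\ 0 <= kappa,
      \sum_(e < n) mu e * sigma e = 0 /\ kappa * tau = 0 &
      (forall e, 0 <= sigma e) /\ 0 <= tau].

End Canonical.

(* Main.v *)
Require Import Defs.
From HB Require Import structures.
From mathcomp Require Import all_boot all_order all_algebra.
From mathcomp Require Import all_classical all_reals all_analysis.
Import Order.TTheory GRing.Theory Num.Theory.
From mathcomp Require Import ring lra.
Import numFieldNormedType.Exports.
Local Open Scope ring_scope.

Lemma quad_der (R : realType) (a b c x : R) :
  is_derive x (1:R) (fun t : R => a + b * t + c * t ^+ 2) (b + 2 * c * x).
Proof.
have -> : (fun t : R => a + b * t + c * t ^+ 2) = cst a + cst b * id + cst c * (id ^+ 2).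
  by apply/funext => t /=.
apply: is_derive_eq.
by rewrite !scaler0 !addr0 add0r /cst /= /GRing.scale /=; ring.
Qed.

Lemma rat_der (R : realType) (p q : R) : q != 0 ->
  is_derive (0:R) (1:R) (fun s : R => (s + p) ^+ 2 / (4 * (q + s)))
     (p / (2 * q) - p ^+ 2 / (4 * q ^+ 2)).
Proof.
move=> hq.
have h1 : is_derive (0:R) (1:R) (fun s : R => 4 * (q + s)) 4.
  have -> : (fun s : R => 4 * (q + s)) = cst 4 * (cst q + id) by apply/funext.
  apply: is_derive_eq.
  by rewrite /cst /= /GRing.scale /=; ring.
have h2 := @is_deriveV R (fun s : R => 4 * (q + s)) 0 4 1.
have h3 : is_derive (0:R) (1:R) (fun s : R => (s + p) ^+ 2) (2 * p).
  have -> : (fun s : R => (s + p) ^+ 2) = (id + cst p) ^+ 2 by apply/funext.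
  apply: is_derive_eq.
  have -> : ((id + cst p) 0 : R) = p by rewrite fctE /= add0r.
  by rewrite expr1 addr0 /GRing.scale /= mulr1.
have h4 : (4 * (q + 0) : R) != 0 by rewrite addr0 mulf_neq0 // pnatr_eq0.
have := is_deriveM h3 (h2 h4 h1).
have -> : (fun s : R => (s + p) ^+ 2) * (fun s => (4 * (q + s))^-1) =
   (fun s : R => (s + p) ^+ 2 / (4 * (q + s))) by apply/funext.
move=> H; apply: is_derive_eq H _.
rewrite /GRing.scale /= !add0r !addr0.
by field.
Qed.

Lemma sum_upd (R : realType) n (F : 'I_n -> R -> R) (x : 'I_n -> R) i s :
  \sum_(e < n) F e (upd x i s e) = \sum_(e < n) F e (x e) + (F i (x i + s) - F i (x i)).
Proof.
rewrite (bigD1 i) //= [in RHS](bigD1 i) //=.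
have -> : \sum_(e < n | e != i) F e (upd x i s e) = \sum_(e < n | e != i) F e (x e).
  by apply: eq_bigr => e /negbTE he; rewrite /upd he addr0.
by rewrite /upd eqxx; ring.
Qed.

Theorem theorem1 (R : realType) (n : nat) (w v : 'I_n -> R) (Vc : R)
  (hn : (0 < n)%N) (hv : forall e, 0 < v e) (hVc : 0 < Vc)
  (rhob sigmab : 'I_n -> R) (taub : R)
  (hsig : forall e, sigmab e != 0)
  (hKKT : KKT_Xi w v Vc rhob sigmab taub) :
  KKT_Pi_u w v Vc rhob /\ KKT_Pi_ud w v Vc sigmab taub /\
  Pi_u w v Vc rhob = Xi w v Vc rhob sigmab taub /\
  Xi w v Vc rhob sigmab taub = Pi_ud w v Vc sigmab taub.
Proof.
have hK := hKKT.
case: hKKT => hst [hs ht] [hc1 hc2] [hp1 hp2].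
pose p := fun j => sigmab j + w j - taub * v j.
have hrho : forall j, rhob j = p j / (2 * sigmab j).
  move=> j.
  pose c := (2 * rhob j - 1) * sigmab j + v j * taub - w j.
  pose f := fun s => Lagr w v Vc sigmab taub (upd rhob j s).
  have hd : is_derive (0:R) (1:R) f c.
    have -> : f = (fun s => Lagr w v Vc sigmab taub rhob + c * s + sigmab j * s ^+ 2).
      apply/funext => s; rewrite /f /Lagr /Lam_nu /dotw /Lam_eps.
      have E1 : \sum_(e < n) (upd rhob j s e ^+ 2 - upd rhob j s e) * sigmab e =
        \sum_(e < n) (rhob e ^+ 2 - rhob e) * sigmab e +
        (((rhob j + s) ^+ 2 - (rhob j + s)) * sigmab j - (rhob j ^+ 2 - rhob j) * sigmab j)
        := sum_upd _ _ (fun e r => (r ^+ 2 - r) * sigmab e) rhob j s.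
      have E2 : \sum_(e < n) upd rhob j s e * v e =
        \sum_(e < n) rhob e * v e + ((rhob j + s) * v j - rhob j * v j)
        := sum_upd _ _ (fun e r => r * v e) rhob j s.
      have E3 : \sum_(e < n) w e * upd rhob j s e =
        \sum_(e < n) w e * rhob e + (w j * (rhob j + s) - w j * rhob j)
        := sum_upd _ _ (fun e r => w e * r) rhob j s.
      rewrite E1 E2 E3 /c; ring.
    apply: is_derive_eq (quad_der _ _ _ _ _) _; ring.
  have h0 : is_derive (0:R) (1:R) f 0 := hst j.
  have e1 : 'D_1 f 0 = c := derive_val.
  have e0 : 'D_1 f 0 = 0 := derive_val.
  have hc : c = 0 by rewrite -e1 e0.
  have hsj := hsig j.
  rewrite /p; apply/(@mulIf _ (2 * sigmab j)); first by rewrite mulf_neq0 // pnatr_eq0.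
  rewrite divfK; last by rewrite mulf_neq0 // pnatr_eq0.
  move: hc; rewrite /c => hc; lra.
split; first by exists sigmab, taub.
split.
  split; first exact: hsig.
  exists (fun e => - Lam_eps rhob e), (- Lam_nu v Vc rhob).
  split.
  - split.
    + move=> e; rewrite /has_partial.
      pose K := - (\sum_(j < n) (sigmab j + w j - taub * v j) ^+ 2 / (4 * sigmab j)
         - (sigmab e + w e - taub * v e) ^+ 2 / (4 * sigmab e)) - taub * Vc.
      have -> : (fun s => Pud w v Vc (upd sigmab e s) taub) =
          cst K - (fun s : R => (s + p e) ^+ 2 / (4 * (sigmab e + s))).
        apply/funext => s; rewrite /Pud /K /cst /=.
        have E : \sum_(j < n) (upd sigmab e s j + w j - taub * v j) ^+ 2 / (4 * upd sigmab e s j)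
          = \sum_(j < n) (sigmab j + w j - taub * v j) ^+ 2 / (4 * sigmab j) +
            ((sigmab e + s + w e - taub * v e) ^+ 2 / (4 * (sigmab e + s))
             - (sigmab e + w e - taub * v e) ^+ 2 / (4 * sigmab e))
          := sum_upd _ _ (fun j r => (r + w j - taub * v j) ^+ 2 / (4 * r)) sigmab e s.
        rewrite E /p !fctE /=; ring.
      have H : is_derive (0:R) (1:R)
          (cst K - (fun s : R => (s + p e) ^+ 2 / (4 * (sigmab e + s))))
          (0 - (p e / (2 * sigmab e) - p e ^+ 2 / (4 * sigmab e ^+ 2))).
        by apply: is_deriveB; (exact: is_derive_cst || exact: rat_der).
      apply: is_derive_eq H _.
      have hse := hsig e.
      rewrite opprK /Lam_eps hrho; by field.
    + pose A := - \sum_(j < n) (sigmab j + w j) ^+ 2 / (4 * sigmab j).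
      pose B := \sum_(j < n) 2 * (sigmab j + w j) * v j / (4 * sigmab j) - Vc.
      pose C := - \sum_(j < n) v j ^+ 2 / (4 * sigmab j).
      have -> : (fun t => Pud w v Vc sigmab t) = (fun t => A + B * t + C * t ^+ 2).
        apply/funext => t; rewrite /Pud /A /B /C.
        have E : \sum_(j < n) (sigmab j + w j - t * v j) ^+ 2 / (4 * sigmab j) =
          \sum_(j < n) (sigmab j + w j) ^+ 2 / (4 * sigmab j)
          - t * \sum_(j < n) 2 * (sigmab j + w j) * v j / (4 * sigmab j)
          + t ^+ 2 * \sum_(j < n) v j ^+ 2 / (4 * sigmab j).
          rewrite !mulr_sumr -sumrB -big_split /=; apply: eq_bigr => j _; ring.
        rewrite E; ring.
      apply: is_derive_eq (quad_der _ _ _ _ _) _.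
      have HS : \sum_(j < n) rhob j * v j =
          \sum_(j < n) 2 * (sigmab j + w j) * v j / (4 * sigmab j)
          - 2 * taub * \sum_(j < n) v j ^+ 2 / (4 * sigmab j).
        rewrite mulr_sumr -sumrB; apply: eq_bigr => j _.
        have hsj := hsig j.
        rewrite hrho /p; by field.
      rewrite opprK /Lam_nu HS /B /C; ring.
  - split; first by move=> e; rewrite oppr_ge0.
    by rewrite oppr_ge0.
  - split.
      transitivity (- \sum_(e < n) sigmab e * Lam_eps rhob e).
        by rewrite -sumrN; apply: eq_bigr => e _; ring.
      by rewrite hc1 oppr0.
    by rewrite mulNr mulrC hc2 oppr0.
  - by split.
have hPsi : Psi (Lam_eps rhob) (Lam_nu v Vc rhob) = 0%E.
  by rewrite /Psi asboolT.
have hPs : Psi_star sigmab taub = 0%E by rewrite /Psi_star asboolT.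
have hL : Lagr w v Vc sigmab taub rhob = - dotw w rhob.
  rewrite /Lagr.
  have -> : \sum_(e < n) Lam_eps rhob e * sigmab e = 0.
    by rewrite -[in RHS]hc1; apply: eq_bigr => e _; rewrite mulrC.
  by rewrite mulrC hc2 addr0 add0r.
have hLP : Lagr w v Vc sigmab taub rhob = Pud w v Vc sigmab taub.
  rewrite /Lagr /Pud /Lam_nu /dotw.
  have E : \sum_(e < n) Lam_eps rhob e * sigmab e + (\sum_(e < n) rhob e * v e) * taub
     - \sum_(e < n) w e * rhob e =
     - \sum_(e < n) (sigmab e + w e - taub * v e) ^+ 2 / (4 * sigmab e).
    rewrite mulr_suml -big_split -sumrB -sumrN /=; apply: eq_bigr => e _.
    have hse := hsig e.
    rewrite /Lam_eps hrho /p; by field.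
  rewrite mulrBl -E; ring.
split.
  by rewrite /Pi_u /Xi hPsi hPs hL sub0e sube0 EFinN.
by rewrite /Xi /Pi_ud hLP.
Qed.
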